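(* Let $(X,d)$ be a metric space such that $d(v,v')\le \pi/2$ for all $v,v'\in X$, and let $T\colon X\to X$ be a mapping. Then: (i) If $T$ is firmly vicinal, then $T$ is vicinal; if moreover $d(v,v')<\pi/2$ for all $v,v'\in X$, then $T$ is firmly spherically nonspreading. (ii) If $T$ is firmly vicinal and $\mathrm{Fix}(T)\neq\emptyset$, then $\cos d(Tx,x)\,\cos d(Tx,y)\ge \cos d(x,y)$ for all $x\in X$ and $y\in \mathrm{Fix}(T)$. (iii) If $T$ is vicinal and $\mathrm{Fix}(T)\ne\emptyset$, then $T$ is quasi-nonexpansive. (iv) If $d(v,v')<\pi/2$ for all $v,v'\in X$, $T$ is firmly vicinal and $\mathrm{Fix}(T)\neq\emptyset$, then $T$ is asymptotically regular.
   Context: $\mathrm{Fix}(T)=\{u\in X: Tu=u\}$. For $z\in X$ put $C_z=\cos d(Tz,z)$. $T$ is called vicinal if for all $x,y\in X$: $\bigl(C_x^2(1+C_y^2)+C_y^2(1+C_x^2)\bigr)\cos d(Tx,Ty)\ge C_x^2(1+C_y^2)\cos d(Tx,y)+C_y^2(1+C_x^2)\cos d(Ty,x)$. $T$ is called firmly vicinal if for all $x,y\in X$: $\bigl(C_x^2(1+C_y^2)C_y+C_y^2(1+C_x^2)C_x\bigr)\cos d(Tx,Ty)\ge C_x^2(1+C_y^2)\cos d(Tx,y)+C_y^2(1+C_x^2)\cos d(Ty,x)$. $T$ is firmly spherically nonspreading if $(C_x+C_y)\cos^2 d(Tx,Ty)\ge 2\cos d(Tx,y)\cos d(Ty,x)$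 for all $x,y\in X$. $T$ is quasi-nonexpansive if $\mathrm{Fix}(T)\neq\emptyset$ and $d(Tx,y)\le d(x,y)$ for all $x\in X$, $y\in\mathrm{Fix}(T)$. $T$ is asymptotically regular if $\lim_{n\to\infty} d(T^{n+1}x,T^nx)=0$ for every $x\in X$. *)

(* Defs.v *)
From Stdlib Require Import Reals.
Open Scope R_scope.

Definition is_metric {X : Type} (d : X -> X -> R) : Prop :=
  (forall x y, 0 <= d x y) /\
  (forall x y, d x y = 0 <-> x = y) /\
  (forall x y, d x y = d y x) /\
  (forall x y z, d x z <= d x y + d y z).

Definition Fix {X : Type} (T : X -> X) (u : X) : Prop := T u = u.

Definition Cz {X : Type} (d : X -> X -> R) (T : X -> X) (z : X) : R :=
  cos (d (T z) z).

Definition vicinal {X : Type} (d : X -> X -> R) (T : X -> X) : Prop :=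
  forall x y : X,
    let Cx := Cz d T x in let Cy := Cz d T y in
    (Cx^2 * (1 + Cy^2) + Cy^2 * (1 + Cx^2)) * cos (d (T x) (T y))
      >= Cx^2 * (1 + Cy^2) * cos (d (T x) y) + Cy^2 * (1 + Cx^2) * cos (d (T y) x).

Definition firmly_vicinal {X : Type} (d : X -> X -> R) (T : X -> X) : Prop :=
  forall x y : X,
    let Cx := Cz d T x in let Cy := Cz d T y in
    (Cx^2 * (1 + Cy^2) * Cy + Cy^2 * (1 + Cx^2) * Cx) * cos (d (T x) (T y))
      >= Cx^2 * (1 + Cy^2) * cos (d (T x) y) + Cy^2 * (1 + Cx^2) * cos (d (T y) x).

Definition firmly_spherically_nonspreading {X : Type} (d : X -> X -> R) (T : X -> X) : Prop :=
  forall x y : X,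
    (Cz d T x + Cz d T y) * (cos (d (T x) (T y)))^2
      >= 2 * cos (d (T x) y) * cos (d (T y) x).

Definition quasi_nonexpansive {X : Type} (d : X -> X -> R) (T : X -> X) : Prop :=
  (exists u, Fix T u) /\ (forall x y, Fix T y -> d (T x) y <= d x y).

Definition asymptotically_regular {X : Type} (d : X -> X -> R) (T : X -> X) : Prop :=
  forall x : X, Un_cv (fun n => d (Nat.iter (S n) T x) (Nat.iter n T x)) 0.

(* Main.v *)
Require Import Defs.
From Stdlib Require Import Reals Lra Psatz Lia.
Open Scope R_scope.

Section Aux.
Variable (X : Type) (d : X -> X -> R) (T : X -> X).

Lemma cos_rng (Hd : is_metric d) (Hdiam : forall v v' : X, d v v' <= PI / 2) :
  forall v v', 0 <= cos (d v v') <= 1.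
Proof.
  intros v v'. destruct Hd as [H0 _]. pose proof PI_RGT_0.
  split. apply cos_ge_0. specialize (H0 v v'); lra. apply Hdiam.
  apply COS_bound.
Qed.

Lemma cos_pos (Hd : is_metric d) (Hs : forall v v' : X, d v v' < PI / 2) :
  forall v v', 0 < cos (d v v').
Proof.
  intros v v'. destruct Hd as [H0 _]. pose proof PI_RGT_0.
  apply cos_gt_0. specialize (H0 v v'); lra. apply Hs.
Qed.

Lemma fixed_fact (Hd : is_metric d) (Hdiam : forall v v' : X, d v v' <= PI / 2) :
  firmly_vicinal d T -> forall x y, Fix T y ->
    cos (d (T x) x) * cos (d (T x) y) >= cos (d x y).
Proof.
  intros H x y Hy. specialize (H x y). simpl in H. unfold Cz in H.
  unfold Fix in Hy. rewrite Hy in H.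
  destruct Hd as [H0 [H1 [H2 H3]]].
  assert (d y y = 0) as E by (apply H1; reflexivity).
  rewrite E, cos_0, (H2 y x) in H.
  set (c := cos (d (T x) x)) in *.
  assert (1 + c^2 > 0) by nra.
  assert ((1 + c^2) * (c * cos (d (T x) y) - cos (d x y)) >= 0) by nra.
  nra.
Qed.

Lemma vic_fact (Hd : is_metric d) (Hdiam : forall v v' : X, d v v' <= PI / 2) :
  vicinal d T -> forall x y, Fix T y -> cos (d (T x) y) >= cos (d x y).
Proof.
  intros H x y Hy. specialize (H x y). simpl in H. unfold Cz in H.
  unfold Fix in Hy. rewrite Hy in H.
  destruct Hd as [H0 [H1 [H2 H3]]].
  assert (d y y = 0) as E by (apply H1; reflexivity).
  rewrite E, cos_0, (H2 y x) in H.
  set (c := cos (d (T x) x)) in *.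
  assert (1 + c^2 > 0) by nra.
  assert ((1 + c^2) * (cos (d (T x) y) - cos (d x y)) >= 0) by nra.
  nra.
Qed.

End Aux.

Theorem lemma3p2 (X : Type) (d : X -> X -> R) (T : X -> X)
  (Hd : is_metric d) (Hdiam : forall v v' : X, d v v' <= PI / 2) :
  (firmly_vicinal d T -> vicinal d T) /\
  (firmly_vicinal d T -> (forall v v' : X, d v v' < PI / 2) ->
     firmly_spherically_nonspreading d T) /\
  (firmly_vicinal d T -> (exists u, Fix T u) ->
     forall x y : X, Fix T y -> cos (d (T x) x) * cos (d (T x) y) >= cos (d x y)) /\
  (vicinal d T -> (exists u, Fix T u) -> quasi_nonexpansive d T) /\
  ((forall v v' : X, d v v' < PI / 2) -> firmly_vicinal d T -> (exists u, Fix T u) ->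
     asymptotically_regular d T).
Proof.
  pose proof (cos_rng X d Hd Hdiam) as CR.
  split; [|split; [|split; [|split]]].
  - intros H x y. specialize (H x y). simpl in H |- *. unfold Cz in *.
    pose proof (CR (T x) x). pose proof (CR (T y) y). pose proof (CR (T x) (T y)).
    set (a := cos (d (T x) x)) in *. set (b := cos (d (T y) y)) in *.
    set (c := cos (d (T x) (T y))) in *.
    assert (a^2 * (1 + b^2) * b * c <= a^2 * (1 + b^2) * c).
    { apply Rmult_le_compat_r. lra.
      rewrite <- (Rmult_1_r (a^2 * (1+b^2))) at 2. apply Rmult_le_compat_l; nra. }
    assert (b^2 * (1 + a^2) * a * c <= b^2 * (1 + a^2) * c).
    { apply Rmult_le_compat_r. lra.
      rewrite <- (Rmult_1_r (b^2 * (1+a^2))) at 2. apply Rmult_le_compat_l; nra. }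
    nra.
  - intros H Hs x y. specialize (H x y). cbv zeta in H. unfold firmly_spherically_nonspreading.
    unfold Cz in *.
    pose proof (CR (T x) x). pose proof (CR (T y) y). pose proof (CR (T x) (T y)).
    pose proof (CR (T x) y). pose proof (CR (T y) x).
    pose proof (cos_pos X d Hd Hs (T x) x). pose proof (cos_pos X d Hd Hs (T y) y).
    set (u := cos (d (T x) x)) in *. set (v := cos (d (T y) y)) in *.
    set (c := cos (d (T x) (T y))) in *.
    set (p := cos (d (T x) y)) in *. set (q := cos (d (T y) x)) in *.
    set (a := u^2 * (1 + v^2)) in *. set (b := v^2 * (1 + u^2)) in *.
    set (K := a * v + b * u) in *.
    assert (Ha : a > 0) by (unfold a; nra).
    assert (Hb : b > 0) by (unfold b; nra).
    assert (HK : 0 <= K) by (unfold K; nra).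
    assert (G1 : 4 * a * b * (p * q) <= (a*p + b*q)^2) by (pose proof (pow2_ge_0 (a*p - b*q)); nra).
    assert (G2 : (a*p + b*q)^2 <= K^2 * c^2).
    { assert (0 <= a*p+b*q) by (apply Rplus_le_le_0_compat; apply Rmult_le_pos; lra). assert (a*p+b*q <= K*c) by lra. nra. }
    assert (G3 : K^2 <= 2 * a * b * (u + v)).
    { unfold K, a, b.
      assert (E : (u ^ 2 * (1 + v ^ 2) * v + v ^ 2 * (1 + u ^ 2) * u) ^ 2 =
                  u^2 * v^2 * ((u+v)^2 * (1 + u*v)^2)) by ring.
      rewrite E.
      assert (E2 : 2 * (u ^ 2 * (1 + v ^ 2)) * (v ^ 2 * (1 + u ^ 2)) * (u + v) =
                  u^2 * v^2 * (2 * (1+u^2)*(1+v^2)*(u+v))) by ring.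
      rewrite E2. apply Rmult_le_compat_l. nra.
      assert ((1+u*v)^2 <= (1+u^2)*(1+v^2)) by (pose proof (pow2_ge_0 (u-v)); nra).
      assert (u + v <= 2) by lra.
      assert (0 <= u+v) by lra.
      assert ((u+v)^2 * (1+u*v)^2 <= (u+v)*((1+u^2)*(1+v^2)*(u+v))).
      { assert (0 <= (u+v)^2 * ((1+u^2)*(1+v^2) - (1+u*v)^2)).
        { apply Rmult_le_pos. apply pow2_ge_0. lra. }
        assert (E3 : (u+v)*((1+u^2)*(1+v^2)*(u+v)) - (u+v)^2 * (1+u*v)^2 =
          (u+v)^2 * ((1+u^2)*(1+v^2) - (1+u*v)^2)) by ring.
        lra. }
      assert ((u+v)*((1+u^2)*(1+v^2)*(u+v)) <= 2 * ((1+u^2)*(1+v^2)*(u+v))).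
      { apply Rmult_le_compat_r. nra. lra. }
      nra. }
    assert (G4 : 4 * a * b * (p * q) <= 2 * a * b * (u + v) * c^2).
    { assert (K^2 * c^2 <= 2 * a * b * (u + v) * c^2).
      { apply Rmult_le_compat_r. nra. lra. }
      lra. }
    assert (Hab : 2 * a * b > 0) by nra.
    assert (2 * a * b * ((u+v) * c^2 - 2 * p * q) >= 0) by nra.
    nra.
  - intros H _. exact (fixed_fact X d T Hd Hdiam H).
  - intros H Hu. split. exact Hu. intros x y Hy.
    pose proof (vic_fact X d T Hd Hdiam H x y Hy) as Hc.
    destruct (Rle_or_lt (d (T x) y) (d x y)) as [|Hlt]. assumption.
    exfalso. destruct Hd as [H0 _]. pose proof PI_RGT_0.
    pose proof (Hdiam (T x) y). pose proof (Hdiam x y).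
    pose proof (H0 (T x) y). pose proof (H0 x y).
    pose proof (cos_decreasing_1 (d x y) (d (T x) y)). lra.
  - intros Hs H [y Hy] x.
    pose proof (fixed_fact X d T Hd Hdiam H) as FF.
    set (z := fun n => Nat.iter n T x).
    set (s := fun n => cos (d (z n) y)).
    assert (Key : forall n, s n <= cos (d (T (z n)) (z n)) * s (S n)).
    { intro n. pose proof (FF (z n) y Hy). unfold s. simpl. lra. }
    assert (Gr : forall n, s n <= s (S n)).
    { intro n. pose proof (Key n). pose proof (CR (T (z n)) (z n)).
      assert (0 <= s (S n)) by (apply CR). nra. }
    assert (S0 : 0 < s O) by (apply (cos_pos X d Hd Hs)).
    assert (Lo : forall n, s O <= s n).
    { induction n. lra. pose proof (Gr n). lra. }
    destruct (growing_cv s) as [L HL].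
    { intro n. apply Gr. }
    { exists 1. intros r [i ->]. apply CR. }
    intros eps Heps.
    pose proof PI_RGT_0 as HPI.
    set (e' := Rmin eps (PI/2)).
    assert (He'1 : 0 < e') by (unfold e'; apply Rmin_glb_lt; lra).
    assert (He'2 : e' <= PI/2) by (unfold e'; apply Rmin_r).
    assert (He'3 : e' <= eps) by (unfold e'; apply Rmin_l).
    assert (Hce : cos e' < 1).
    { rewrite <- cos_0. apply cos_decreasing_1; lra. }
    set (del := 1 - cos e').
    assert (Hdel : 0 < del) by (unfold del; lra).
    destruct (HL (del * s O / 2)) as [N HN].
    { apply Rmult_lt_0_compat. nra. lra. }
    exists N. intros n Hn.
    pose proof (HN n Hn) as A1. pose proof (HN (S n) ltac:(lia)) as A2.
    unfold R_dist in A1, A2.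
    apply Rabs_def2 in A1. apply Rabs_def2 in A2.
    pose proof (Key n) as Kn. pose proof (Lo (S n)) as Ln.
    pose proof (CR (T (z n)) (z n)) as Cn.
    set (C := cos (d (T (z n)) (z n))) in *.
    assert (Hd1 : (1 - C) * s O <= s (S n) - s n) by nra.
    assert (Hd2 : s (S n) - s n < del * s O) by lra.
    assert (HC : 1 - C < del).
    { apply (Rmult_lt_reg_r (s O)). lra. lra. }
    destruct Hd as [H0 _].
    unfold R_dist. simpl. fold (z n).
    rewrite Rminus_0_r, Rabs_pos_eq by apply H0.
    destruct (Rlt_or_le (d (T (z n)) (z n)) e') as [Hlt|Hge]. lra.
    exfalso.
    assert (cos (d (T (z n)) (z n)) <= cos e').
    { destruct (Req_dec (d (T (z n)) (z n)) e') as [Heq|Hne].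
      rewrite Heq; lra.
      left. apply cos_decreasing_1; try lra. pose proof (Hdiam (T (z n)) (z n)); lra. }
    fold C in H1. unfold del in HC. lra.
Qed.
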